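(* Consider $\dot x=f(x)+\psi(x)$, where $f,\psi:\mathbb R^n\to\mathbb R^n$ are continuous, $f(0)=0$, and there exists $L>0$ with $\|\psi(x)\|\le L\|x\|$ for all $x\in\mathbb R^n$. Suppose there is a continuously differentiable positive definite function $V:\mathbb R^n\to\mathbb R$ such that along trajectories of the nominal system $\dot x=f(x)$, $$\dot V(x)=\frac{\partial V}{\partial x}(x)f(x)\le-aV(x)^p-bV(x)^q$$ with $a,b>0$, $0<p<1$, $q>1$, and suppose there exist $k_1,k_2>0$ such that $V(x)\ge k_1\|x\|^2$ and $\|\frac{\partial V}{\partial x}(x)\|\le k_2\|x\|$ for all $x\in\mathbb R^n$. Then the origin of $\dot x=f(x)+\psi(x)$ is fixed-time stable.
   Context: The origin of $\dot x=F(x)$ is fixed-time stable if it is Lyapunov stable and there exist a neighborhood $D$ of the origin and a constant $T<\infty$ such that every solution with $x(0)\in D$ satisfies $x(t)=0$ for all $t\ge T$ (the bound $T$ being independent of the initial condition in $D$). *)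

(* Defs.v *)
From HB Require Import structures.
From mathcomp Require Import all_boot all_order all_algebra.
From mathcomp Require Import all_classical all_reals all_analysis.
Set Implicit Arguments. Unset Strict Implicit. Unset Printing Implicit Defensive.
Import Order.TTheory GRing.Theory Num.Theory.
Import numFieldNormedType.Exports.
Local Open Scope classical_set_scope.
Local Open Scope ring_scope.

Definition grad (R : realType) (n : nat) (V : 'rV[R]_n -> R) (x : 'rV[R]_n)
  : 'rV[R]_n := \row_(i < n) derive V x (delta_mx 0 i).

Definition dotv (R : realType) (n : nat) (u v : 'rV[R]_n) : R :=
  \sum_(i < n) u 0 i * v 0 i.

Definition C1 (R : realType) (n : nat) (V : 'rV[R]_n -> R) : Prop :=
  (forall x, differentiable V x) /\ continuous (grad V).

Definition pos_def (R : realType) (n : nat) (V : 'rV[R]_n -> R) : Prop :=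
  V 0 = 0 /\ forall x, x != 0 -> 0 < V x.

(* x : [0,oo) -> R^n is a (forward, globally defined) solution of xdot = F x:
   differentiable at each t > 0 with derivative F (x t), right-continuous at 0. *)
Definition is_solution (R : realType) (n : nat) (F : 'rV[R]_n -> 'rV[R]_n)
  (x : R -> 'rV[R]_n) : Prop :=
  (forall t : R, 0 < t -> derivable x t 1 /\ 'D_1 x t = F (x t)) /\
  x @ at_right 0 --> x 0.

Definition lyapunov_stable (R : realType) (n : nat) (F : 'rV[R]_n -> 'rV[R]_n)
  : Prop :=
  forall eps : R, 0 < eps -> exists2 delta : R, 0 < delta &
    forall x : R -> 'rV[R]_n, is_solution F x -> `|x 0| < delta ->
      forall t : R, 0 <= t -> `|x t| < eps.

Definition fixed_time_stable (R : realType) (n : nat) (F : 'rV[R]_n -> 'rV[R]_n)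
  : Prop :=
  lyapunov_stable F /\
  exists D : set 'rV[R]_n, nbhs (0 : 'rV[R]_n) D /\
    exists T : R, forall x : R -> 'rV[R]_n, is_solution F x -> D (x 0) ->
      forall t : R, T <= t -> 0 <= t -> x t = 0.

(* Main.v *)
Require Import Defs.
From HB Require Import structures.
From mathcomp Require Import all_boot all_order all_algebra.
From mathcomp Require Import all_classical all_reals all_analysis.
From mathcomp Require Import lra ring.
Import Order.TTheory GRing.Theory Num.Theory.
Import numFieldNormedType.Exports.
Local Open Scope classical_set_scope.
Local Open Scope ring_scope.
Lemma entry_le (R : realType) n (u : 'rV[R]_n) i : `|u 0 i| <= `|u|.
Proof.
rewrite [X in _ <= X]mx_normrE.
apply: (le_trans _ (le_bigmax _ _ (0, i))) => //=.
Qed.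
Lemma dot_le (R : realType) n (u v : 'rV[R]_n) : `|dotv u v| <= n%:R * (`|u| * `|v|).
Proof.
rewrite /dotv; apply: (le_trans (ler_norm_sum _ _ _)).
have -> : n%:R * (`|u| * `|v|) = \sum_(i < n) (`|u| * `|v|).
  by rewrite sumr_const card_ord mulr_natl.
apply: ler_sum => i _; rewrite normrM; apply: ler_pM => //; exact: entry_le.
Qed.

Lemma dV_dot (R : realType) n (V : 'rV[R]_n -> R) y v :
  differentiable V y -> 'd V y v = dotv (grad V y) v.
Proof.
move=> dV; rewrite [in LHS](row_sum_delta v) linear_sum /dotv.
apply: eq_bigr => i _; rewrite linearZ /= mxE -deriveE // mulrC.
done.
Qed.
Lemma chain (R : realType) n (V : 'rV[R]_n -> R) (x : R -> 'rV[R]_n) t :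
  differentiable V (x t) -> derivable x t 1 ->
  derivable (V \o x) t 1 /\ derive1 (V \o x) t = dotv (grad V (x t)) ('D_1 x t).
Proof.
move=> dV /derivable1_diffP dx.
have dc : differentiable (V \o x) t by exact: differentiable_comp.
split; first exact/derivable1_diffP.
rewrite derive1E deriveE // diff_comp //= -dV_dot //.
by rewrite deriveE.
Qed.
Lemma mono_on (R : realType) (W : R -> R) (W0 s : R) :
  {within `[0, +oo[, continuous W} ->
  (forall t, 0 < t -> derivable W t 1) ->
  (forall t, 0 < t -> W t < W0 -> derive1 W t <= 0) ->
  0 <= s -> (forall u, 0 < u < s -> W u < W0) ->
  forall u v, 0 <= u -> u <= v -> v <= s -> W v <= W u.
Proof.
move=> Wc Wd Wn s0 Hs u v u0 uv vs.
apply: (@ler0_derive1_le_cc _ W 0 s).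
- by move=> y; rewrite in_itv /= => /andP[y0 ys]; apply: Wd.
- by move=> y; rewrite in_itv /= => /andP[y0 ys]; apply: Wn => //; apply: Hs; rewrite y0.
- apply: continuous_subspaceW Wc; apply: subset_itv; by rewrite bnd_simp.
- by rewrite in_itv /=; apply/andP; split; lra.
- by rewrite in_itv /=; apply/andP; split; lra.
- exact: uv.
Qed.
Lemma inv_region (R : realType) (W : R -> R) (W0 : R) :
  {within `[0, +oo[, continuous W} ->
  (forall t, 0 < t -> derivable W t 1) ->
  (forall t, 0 < t -> W t < W0 -> derive1 W t <= 0) ->
  W 0 < W0 -> forall t, 0 <= t -> W t < W0.
Proof.
move=> Wc Wd Wn W00 t t0; rewrite ltNge; apply/negP => Wt.
pose S := [set u : R | 0 <= u /\ W0 <= W u].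
have S0 : S !=set0 by exists t.
have Slb : has_lbound S by exists 0 => u [].
pose s := inf S.
have s0 : 0 <= s by apply: lb_le_inf => // u [].
have notS u : 0 <= u -> u < s -> W u < W0.
  move=> u0 us; rewrite ltNge; apply/negP => h.
  have := ge_inf Slb (conj u0 h); rewrite -/s; lra.
have Ws : W s <= W 0.
  have Hs : forall u, 0 < u < s -> W u < W0.
    by move=> u /andP[u0 us]; apply: notS => //; lra.
  have := @mono_on R W W0 s Wc Wd Wn s0 Hs 0 s (lexx 0) s0 (lexx s).
  done.
have Wslt : W s < W0 by lra.
have := (proj1 (subspace_continuousP _ _) Wc) s.
move=> hc; have {hc} := hc _.
have As : `[0, +oo[%classic s by rewrite /= in_itv /= s0.
move=> /(_ As) hc.
have := cvgr_lt _ hc _ Wslt.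
move=> /(_ (within_filter _ _)); rewrite near_withinE => /nbhs_ballP [e /= e0 He].
have lb : lbound S (s + e / 2).
  move=> u [u0 h]; rewrite leNgt; apply/negP => ue.
  have [us|su] := ltP u s; first by have := notS u u0 us; lra.
  have bu : ball s e u.
    rewrite -ball_normE /= distrC ger0_norm ?subr_ge0 //; lra.
  have := He u bu; rewrite in_itv /= andbT => /(_ u0) /= hW.
  have : W u < W0 by exact: hW.
  lra.
have := lb_le_inf S0 lb; rewrite -/s; lra.
Qed.
Lemma fin_time (R : realType) (W : R -> R) (W0 k p : R) :
  {within `[0, +oo[, continuous W} ->
  (forall t, 0 < t -> derivable W t 1) ->
  (forall t, 0 < t -> W t < W0 -> derive1 W t <= - k * W t `^ p) ->
  (forall t, 0 <= t -> 0 <= W t) -> 0 < k -> 0 < p -> p < 1 ->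
  W 0 < W0 -> forall t, W0 `^ (1 - p) / (k * (1 - p)) <= t -> 0 <= t -> W t = 0.
Proof.
move=> Wc Wd Wb Wge k0 p0 p1 W00.
have Wn : forall t, 0 < t -> W t < W0 -> derive1 W t <= 0.
  move=> t t0 h; apply: le_trans (Wb t t0 h) _.
  have := powR_ge0 (W t) p; nra.
have inv := @inv_region R W W0 Wc Wd Wn W00.
have mono : forall u v, 0 <= u -> u <= v -> W v <= W u.
  move=> u v u0 uv; apply: (@mono_on R W W0 v Wc Wd Wn) => //; first by lra.
  by move=> y /andP[y0 _]; apply: inv; lra.
move=> t tT t0.
have W0p : 0 < W0 by have := Wge 0 (lexx 0); lra.
pose m := 1 - p; pose c := k * m.
have tT' : W0 `^ m / c <= t by exact: tT.
have m0 : 0 < m by rewrite /m; lra.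
have c0 : 0 < c by rewrite /c; apply: mulr_gt0.
have Tp : 0 < W0 `^ m / c by apply: divr_gt0 => //; apply: powR_gt0.
have cT : c * (W0 `^ m / c) = W0 `^ m by rewrite mulrC -mulrA mulVf ?mulr1 ?gt_eqF.
apply/eqP; rewrite eq_le Wge // andbT leNgt; apply/negP => Wt.
pose P := W t `^ m.
have P0 : 0 < P by apply: powR_gt0.
pose eps := P / (2 * c).
have e0 : 0 < eps by apply: divr_gt0 => //; lra.
have ce : c * eps = P / 2.
  by rewrite /eps; field; rewrite gt_eqF.
have [te|et] := leP t eps.
  have : W0 `^ m <= c * t by rewrite -cT; apply: ler_wpM2l; lra.
  have : P <= W0 `^ m.
    apply: ge0_ler_powR; rewrite ?nnegrE; try lra.
    have := mono 0 t (lexx 0) t0; lra.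
  nra.
pose h := fun u : R => W u `^ m + c * u.
have hd : forall y, 0 < y -> y <= t ->
    is_derive y 1 h (m * W y `^ (m - 1) * 'D_1 W y + c).
  move=> y y0 yt.
  have Wy : 0 < W y by apply: lt_le_trans Wt (mono y t (ltW y0) yt).
  have dW := derivableP (Wd y y0).
  have dp := is_derive1_powR m Wy.
  have dc := is_derive1_comp dp dW.
  have hE : h = ((@powR R) ^~ m \o W) + c \*: (@id R).
    by apply/funext => u; rewrite /h /=.
  rewrite hE; have H := is_deriveD dc (is_deriveZ c (@is_derive_id _ _ y 1)).
  move: H; congr is_derive.
  by congr (_ + _); rewrite /GRing.scale /= mulr1.
have hle : h t <= h eps.
  apply: (@ler0_derive1_le_cc _ h eps t); last first.
  - lra.
  - by rewrite in_itv /=; apply/andP; split; lra.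
  - by rewrite in_itv /=; apply/andP; split; lra.
  - apply: continuous_in_subspaceT => y; rewrite inE /= in_itv /= => /andP[ey yt].
    have [+ _] := hd y ltac:(lra) yt.
    by move/derivable1_diffP/differentiable_continuous.
  - move=> y; rewrite in_itv /= => /andP[ey yt].
    have y0 : 0 < y by lra.
    rewrite derive1E; have [_ ->] := hd y y0 ltac:(lra).
    have Wy : 0 < W y by apply: lt_le_trans Wt (mono y t (ltW y0) ltac:(lra)).
    have Wyb := Wb y y0 (inv y (ltW y0)).
    rewrite derive1E in Wyb.
    have -> : m - 1 = - p by rewrite /m; ring.
    rewrite powRN.
    have q0 : 0 < W y `^ p by apply: powR_gt0.
    have iq : (W y `^ p)^-1 * W y `^ p = 1 by rewrite mulVf ?gt_eqF.
    have iq0 : 0 < (W y `^ p)^-1 by rewrite invr_gt0.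
    have H : m * (W y `^ p)^-1 * 'D_1 W y <= m * (W y `^ p)^-1 * (- k * W y `^ p).
      by apply: ler_wpM2l => //; apply: mulr_ge0; lra.
    have E : m * (W y `^ p)^-1 * (- k * W y `^ p) = - c.
      by rewrite /c; field; rewrite gt_eqF.
    lra.
  - move=> y; rewrite in_itv /= => /andP[ey yt].
    by have [] := hd y ltac:(lra) ltac:(lra).
have : W eps `^ m <= W0 `^ m.
  apply: ge0_ler_powR; rewrite ?nnegrE; try lra.
  - apply: Wge; lra.
  - have := mono 0 eps (lexx 0) (ltW e0); lra.
have : W0 `^ m <= c * t by rewrite -cT; apply: ler_wpM2l; lra.
move: hle; rewrite /h /= -/P.
nra.
Qed.

Lemma dotvD (R : realType) n (u v w : 'rV[R]_n) : dotv u (v + w) = dotv u v + dotv u w.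
Proof. by rewrite /dotv -big_split /=; apply: eq_bigr => i _; rewrite mxE mulrDr. Qed.

Theorem corollary2 (R : realType) (n : nat)
  (f psi : 'rV[R]_n -> 'rV[R]_n) (V : 'rV[R]_n -> R)
  (a b p q L k1 k2 : R) :
  continuous f -> continuous psi -> f 0 = 0 ->
  0 < L -> (forall x, `|psi x| <= L * `|x|) ->
  C1 V -> pos_def V ->
  0 < a -> 0 < b -> 0 < p -> p < 1 -> 1 < q ->
  (forall x, dotv (grad V x) (f x) <= - a * V x `^ p - b * V x `^ q) ->
  0 < k1 -> 0 < k2 ->
  (forall x, k1 * `|x| ^+ 2 <= V x) ->
  (forall x, `|grad V x| <= k2 * `|x|) ->
  fixed_time_stable (fun x => f x + psi x).
Proof.
move=> fc psic f0 L0 psiL [Vd gradc] [V0 Vpos] a0 b0 p0 p1 q1 HV k10 k20 Vk1 Vk2.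
pose c := n%:R * k2 * L / k1.
have c0 : 0 <= c.
  rewrite /c; apply: divr_ge0; last lra.
  apply: mulr_ge0; last lra; apply: mulr_ge0; last lra; exact: ler0n.
pose W0 := (a / (2 * (c + 1))) `^ ((1 - p)^-1).
have W0p : 0 < W0 by apply: powR_gt0; apply: divr_gt0; lra.
have W0m : W0 `^ (1 - p) = a / (2 * (c + 1)).
  rewrite /W0 -powRrM mulVf ?powRr1 //; last by rewrite gt_eqF //; lra.
  apply: divr_ge0; lra.
have key : forall y, V y < W0 -> dotv (grad V y) (f y + psi y) <= - (a / 2) * V y `^ p.
  move=> y Vy; rewrite dotvD.
  have Vy0 : 0 <= V y.
    apply: le_trans (Vk1 y); apply: mulr_ge0; first lra.
    exact: sqr_ge0.
  have h1 := HV y.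
  have h2 : 0 <= V y `^ q by apply: powR_ge0.
  have h3 : dotv (grad V y) (psi y) <= c * V y.
    apply: le_trans (real_ler_norm _) _; first exact: num_real.
    apply: le_trans (@dot_le R n _ _) _.
    have g1 := Vk2 y; have g2 := psiL y.
    have gp : `|grad V y| * `|psi y| <= (k2 * `|y|) * (L * `|y|).
      by apply: ler_pM => //.
    have : n%:R * (`|grad V y| * `|psi y|) <= n%:R * ((k2 * `|y|) * (L * `|y|)).
      by apply: ler_wpM2l.
    move=> /le_trans; apply.
    have -> : n%:R * (k2 * `|y| * (L * `|y|)) = (n%:R * k2 * L / k1) * (k1 * `|y| ^+ 2).
      by field; rewrite gt_eqF.
    by apply: ler_wpM2l => //.
  have h4 : c * V y <= (a / 2) * V y `^ p.
    have E : V y = V y `^ p * V y `^ (1 - p).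
      rewrite -powRD; last by apply/implyP => /eqP; lra.
      by rewrite addrC subrK powRr1.
    have r1 : V y `^ (1 - p) <= a / (2 * (c + 1)).
      rewrite -W0m; apply: ge0_ler_powR; rewrite ?nnegrE; lra.
    have s0 : 0 <= V y `^ p by apply: powR_ge0.
    rewrite [X in c * X]E.
    have r0 : 0 <= V y `^ (1 - p) by apply: powR_ge0.
    have : c * (V y `^ p * V y `^ (1 - p)) <= c * (V y `^ p * (a / (2 * (c + 1)))).
      by apply: ler_wpM2l => //; apply: ler_wpM2l.
    move=> /le_trans; apply.
    have -> : c * (V y `^ p * (a / (2 * (c + 1)))) = (a / 2) * V y `^ p * (c / (c + 1)).
      by field; rewrite gt_eqF //; lra.
    rewrite -[X in _ <= X]mulr1; apply: ler_wpM2l.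
      apply: mulr_ge0 => //; lra.
    by rewrite ler_pdivrMr; lra.
  have : - a * V y `^ p - b * V y `^ q <= - a * V y `^ p.
    have := mulr_ge0 (ltW b0) h2; lra.
  lra.
have solW : forall x, is_solution (fun x => f x + psi x) x ->
  [/\ {within `[0, +oo[, continuous (V \o x)},
      (forall t, 0 < t -> derivable (V \o x) t 1),
      (forall t, 0 < t -> (V \o x) t < W0 -> derive1 (V \o x) t <= - (a / 2) * (V \o x) t `^ p) &
      (forall t, 0 <= t -> 0 <= (V \o x) t)].
  move=> x [sd sc]; split.
  - apply/continuous_within_itvcyP; split.
      move=> y; rewrite in_itv /= andbT => y0.
      apply: continuous_comp; last exact: differentiable_continuous.
      have [/derivable1_diffP dx _] := sd y y0.
      exact: differentiable_continuous.
    by apply: (@continuous_cvg _ _ _ _ _ x V); [exact: differentiable_continuous | exact: sc].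
  - by move=> t t0; have [dx _] := sd t t0; have [] := @chain R n V x t (Vd (x t)) dx.
  - move=> t t0 Wt; have [dx Dx] := sd t t0; have [_ ->] := @chain R n V x t (Vd (x t)) dx.
    by rewrite Dx; apply: key.
  - move=> t _ /=; apply: le_trans (Vk1 _); apply: mulr_ge0; first lra.
    exact: sqr_ge0.
have Vcont : V @ (0 : 'rV[R]_n) --> 0.
  by have := differentiable_continuous (Vd 0); rewrite /prop_for /continuous_at V0.
split.
- move=> eps e0.
  pose m := Num.min W0 (k1 * eps ^+ 2).
  have m0 : 0 < m by rewrite lt_min W0p /=; apply: mulr_gt0 => //; apply: exprn_gt0.
  have := cvgr_lt _ Vcont _ m0.
  move=> /(_ (nbhs_filter _)) /nbhs_ballP [d /= d0 Hd].
  exists d => // x sol x0d t t0.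
  have [Wc Wd Wb Wge] := solW x sol.
  have Wn : forall t, 0 < t -> (V \o x) t < W0 -> derive1 (V \o x) t <= 0.
    move=> s s0 h; apply: le_trans (Wb s s0 h) _.
    have := powR_ge0 ((V \o x) s) p; nra.
  have Vx0 : V (x 0) < m.
    apply: Hd; rewrite -ball_normE /= sub0r normrN; exact: x0d.
  have Vx0W : (V \o x) 0 < W0 by apply: lt_le_trans Vx0 _; rewrite ge_min lexx.
  have Vx0e : V (x 0) < k1 * eps ^+ 2 by apply: lt_le_trans Vx0 _; rewrite ge_min lexx orbT.
  have inv := @inv_region R (V \o x) W0 Wc Wd Wn Vx0W.
  have Wt : (V \o x) t <= (V \o x) 0.
    apply: (@mono_on R (V \o x) W0 t Wc Wd Wn t0) => //.
    by move=> y /andP[y0 _]; apply: inv; lra.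
  have := Vk1 (x t); rewrite /= in Wt.
  move=> h; have : k1 * `|x t| ^+ 2 < k1 * eps ^+ 2 by lra.
  rewrite ltr_pM2l // => hx.
  have nx : 0 <= `|x t| by [].
  rewrite !expr2 in hx; nra.
- exists [set y | V y < W0]; split.
    by have := cvgr_lt _ Vcont _ W0p; move=> /(_ (nbhs_filter _)).
  exists (W0 `^ (1 - p) / ((a / 2) * (1 - p))) => x sol x0 t tT t0.
  have [Wc Wd Wb Wge] := solW x sol.
  have a20 : 0 < a / 2 by lra.
  have := @fin_time R (V \o x) W0 (a / 2) p Wc Wd Wb Wge a20 p0 p1 x0 t tT t0.
  move=> /= Vxt; apply/eqP; apply: contraT => nz.
  by have := Vpos _ nz; rewrite Vxt ltxx.
Qed.
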